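(* Let $\mathbf{A}_b\in\{0,1\}^{|\mathcal{U}|\times|\mathcal{I}|}$ be the bi-adjacency matrix of a user-item bipartite graph for behavior $b$, and let $\tilde{\mathbf{A}}_b$ be its symmetrically normalized version. Let $\alpha,\beta\ge 0$ with $\gamma = 1-\alpha-\beta\in(0,1)$. Fix vectors $\mathbf{q}_{\mathcal{U}_b},\mathbf{r}_{\mathcal{U}_{b'}}\in\mathbb{R}^{|\mathcal{U}|}$ and $\mathbf{q}_{\mathcal{I}_b},\mathbf{r}_{\mathcal{I}_{b'}}\in\mathbb{R}^{|\mathcal{I}|}$, and starting vectors $\mathbf{r}^{(0)}_{\mathcal{U}_b}$ and $\mathbf{r}^{(0)}_{\mathcal{I}_b}$ (in the algorithm these are $\mathbf{q}_{\mathcal{U}_b}$ and $\mathbf{q}_{\mathcal{I}_b}$). Consider the power iteration, for $k\ge 1$, $$\mathbf{r}^{(k)}_{\mathcal{U}_b} = \gamma\,\tilde{\mathbf{A}}_b\,\mathbf{r}^{(k-1)}_{\mathcal{I}_b} + \alpha\,\mathbf{q}_{\mathcal{U}_b} + \beta\,\mathbf{r}_{\mathcal{U}_{b'}},$$ $$\mathbf{r}^{(k)}_{\mathcal{I}_b} = \gamma\,\tilde{\mathbf{A}}_b^{\top}\,\mathbf{r}^{(k-1)}_{\mathcal{U}_b} + \alpha\,\mathbf{q}_{\mathcal{I}_b} + \beta\,\mathbf{r}_{\mathcal{I}_{b'}}.$$ Then the sequences $\mathbf{r}^{(k)}_{\mathcal{U}_b}$ and $\mathbf{r}^{(k)}_{\mathcal{I}_b}$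 converge as $k\to\infty$.
   Context: Degrees: $d_b(u)=\sum_i\mathbf{A}_b(u,i)$ and $d_b(i)=\sum_u\mathbf{A}_b(u,i)$. The symmetrically normalized bi-adjacency matrix $\tilde{\mathbf{A}}_b$ has entries $\tilde{\mathbf{A}}_b(u,i)=\mathbf{A}_b(u,i)/(\sqrt{d_b(u)}\sqrt{d_b(i)})$ when $\mathbf{A}_b(u,i)=1$, and $0$ otherwise; equivalently $\tilde{\mathbf{A}}_b=\mathbf{D}_{\mathcal{U}_b}^{-1/2}\mathbf{A}_b\mathbf{D}_{\mathcal{I}_b}^{-1/2}$. Here $\mathbf{r}_{\mathcal{U}_{b'}}$ and $\mathbf{r}_{\mathcal{I}_{b'}}$ are the fixed ranking vectors of the preceding behavior $b'$ in the cascading sequence. The iteration is the inner loop of the CascadingRank algorithm when it is run without the early-stopping criterion. *)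

(* Defs.v *)
From HB Require Import structures.
From mathcomp Require Import all_boot all_order all_algebra.
From mathcomp Require Import all_classical all_reals all_analysis.
Set Implicit Arguments. Unset Strict Implicit. Unset Printing Implicit Defensive.
Import Order.TTheory GRing.Theory Num.Theory.
Local Open Scope ring_scope.

Definition deg_user (R : realType) (m n : nat) (A : 'M[R]_(m, n)) (u : 'I_m) : R :=
  \sum_(i < n) A u i.
Definition deg_item (R : realType) (m n : nat) (A : 'M[R]_(m, n)) (i : 'I_n) : R :=
  \sum_(u < m) A u i.

Definition norm_biadj (R : realType) (m n : nat) (A : 'M[R]_(m, n)) : 'M[R]_(m, n) :=
  \matrix_(u < m, i < n)
    (if A u i == 1 then A u i / (Num.sqrt (deg_user A u) * Num.sqrt (deg_item A i))
     else 0).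

Fixpoint cascade_iter (R : realType) (m n : nat) (A : 'M[R]_(m, n))
  (alpha beta : R) (qU rU' rU0 : 'cV[R]_m) (qI rI' rI0 : 'cV[R]_n) (k : nat)
  : 'cV[R]_m * 'cV[R]_n :=
  match k with
  | 0 => (rU0, rI0)
  | k'.+1 =>
    let p := cascade_iter A alpha beta qU rU' rU0 qI rI' rI0 k' in
    let gamma := 1 - alpha - beta in
    (gamma *: (norm_biadj A *m p.2) + alpha *: qU + beta *: rU',
     gamma *: ((norm_biadj A)^T *m p.1) + alpha *: qI + beta *: rI')
  end.

(* Main.v *)
Require Import Defs.
From HB Require Import structures.
From mathcomp Require Import all_boot all_order all_algebra.
From mathcomp Require Import all_classical all_reals all_analysis.
From mathcomp Require Import ring lra.
Import Order.TTheory GRing.Theory Num.Theory.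
Import numFieldNormedType.Exports.
Local Open Scope ring_scope.
Local Open Scope classical_set_scope.

Lemma CS (R : realFieldType) (I : finType) (f g : I -> R) :
  (\sum_i f i * g i) ^+ 2 <= (\sum_i f i ^+ 2) * (\sum_i g i ^+ 2).
Proof.
have H : 0 <= \sum_i \sum_j (f i * g j - f j * g i) ^+ 2.
  by apply: sumr_ge0 => i _; apply: sumr_ge0 => j _; apply: sqr_ge0.
have E : \sum_i \sum_j (f i * g j - f j * g i) ^+ 2 =
   2 * ((\sum_i f i ^+ 2) * (\sum_i g i ^+ 2)) - 2 * (\sum_i f i * g i) ^+ 2.
  transitivity (\sum_i \sum_j (f i ^+ 2 * g j ^+ 2 + f j ^+ 2 * g i ^+ 2
                  - 2 * ((f i * g i) * (f j * g j)))).
    by apply: eq_bigr => i _; apply: eq_bigr => j _; ring.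
  under eq_bigr do rewrite !big_split /=.
  rewrite !big_split /=.
  have e1 : \sum_i \sum_j f i ^+ 2 * g j ^+ 2 = (\sum_i f i ^+ 2) * (\sum_i g i ^+ 2).
    by rewrite mulr_suml; apply: eq_bigr => i _; rewrite mulr_sumr.
  have e2 : \sum_i \sum_j f j ^+ 2 * g i ^+ 2 = (\sum_i f i ^+ 2) * (\sum_i g i ^+ 2).
    by rewrite mulrC mulr_suml; apply: eq_bigr => i _; rewrite mulr_sumr; apply: eq_bigr => j _; rewrite mulrC.
  have e3 : \sum_i \sum_j - (2 * ((f i * g i) * (f j * g j))) = - (2 * (\sum_i f i * g i) ^+ 2).
    rewrite expr2 mulr_suml mulr_sumr -sumrN; apply: eq_bigr => i _.
    rewrite mulr_sumr mulr_sumr -sumrN; apply: eq_bigr => j _; ring.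
  rewrite e1 e2 e3; ring.
rewrite E in H; lra.
Qed.

Definition SS {R : realType} {k} (x : 'cV[R]_k) := \sum_i x i 0 ^+ 2.

Section Key.
Variables (R : realType) (m n : nat) (A : 'M[R]_(m, n)).
Hypothesis HA : forall u i, A u i = 0 \/ A u i = 1.

Lemma A2 u i : A u i ^+ 2 = A u i.
Proof. by case: (HA u i) => ->; rewrite ?expr0n ?expr1n. Qed.

Lemma A_ge0 u i : 0 <= A u i.
Proof. by case: (HA u i) => ->. Qed.

Lemma du_ge0 u : 0 <= deg_user A u.
Proof. by apply: sumr_ge0 => i _; apply: A_ge0. Qed.

Lemma di_ge0 i : 0 <= deg_item A i.
Proof. by apply: sumr_ge0 => u _; apply: A_ge0. Qed.

Lemma nb_entry u i : norm_biadj A u i =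
  A u i / (Num.sqrt (deg_user A u) * Num.sqrt (deg_item A i)).
Proof.
rewrite mxE; case: (HA u i) => ->; first by rewrite mul0r; case: eqP.
by rewrite eqxx.
Qed.

Lemma row_bound (y : 'cV[R]_n) u :
  ((norm_biadj A *m y) u 0) ^+ 2 <= \sum_i A u i * y i 0 ^+ 2 / deg_item A i.
Proof.
rewrite mxE.
set f := fun i => A u i / Num.sqrt (deg_user A u).
set g := fun i => A u i * y i 0 / Num.sqrt (deg_item A i).
have -> : \sum_j norm_biadj A u j * y j 0 = \sum_i f i * g i.
  apply: eq_bigr => i _; rewrite nb_entry /f /g.
  rewrite invfM -{1}(A2 u i) /=; ring.
apply: le_trans (CS _ _ f g) _.
have Hg : \sum_i g i ^+ 2 = \sum_i A u i * y i 0 ^+ 2 / deg_item A i.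
  apply: eq_bigr => i _; rewrite /g !exprMn exprVn A2 sqr_sqrtr ?di_ge0 //.
have Hf : \sum_i f i ^+ 2 <= 1.
  have -> : \sum_i f i ^+ 2 = deg_user A u / deg_user A u.
    rewrite /deg_user mulr_suml; apply: eq_bigr => i _.
    by rewrite /f exprMn exprVn A2 sqr_sqrtr ?du_ge0.
  have [->|nz] := eqVneq (deg_user A u) 0; first by rewrite mul0r.
  by rewrite divff.
rewrite Hg; apply: ler_piMl => //.
apply: sumr_ge0 => i _; apply: mulr_ge0; last by rewrite invr_ge0 di_ge0.
by apply: mulr_ge0; [apply: A_ge0 | apply: sqr_ge0].
Qed.

Lemma key (y : 'cV[R]_n) : SS (norm_biadj A *m y) <= SS y.
Proof.
rewrite /SS.
apply: le_trans (ler_sum _ (fun u _ => row_bound y u)) _.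
rewrite exchange_big /=; apply: ler_sum => i _.
have -> : \sum_u A u i * y i 0 ^+ 2 / deg_item A i =
          y i 0 ^+ 2 * (deg_item A i / deg_item A i).
  rewrite /deg_item mulr_suml mulr_sumr; apply: eq_bigr => u _; ring.
have [->|nz] := eqVneq (deg_item A i) 0; first by rewrite mul0r mulr0 sqr_ge0.
by rewrite divff // mulr1.
Qed.
End Key.

Lemma trmx_nb (R : realType) m n (A : 'M[R]_(m, n)) :
  (norm_biadj A)^T = norm_biadj A^T.
Proof.
apply/matrixP => i u; rewrite !mxE /deg_user /deg_item.
have -> : \sum_(i0 < m) A^T i i0 = \sum_(u0 < m) A u0 i by apply: eq_bigr => ? _; rewrite mxE.
have -> : \sum_(u0 < n) A^T u0 u = \sum_(i0 < n) A u i0 by apply: eq_bigr => ? _; rewrite mxE.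
by rewrite [X in _ / X]mulrC.
Qed.

Lemma normed_cvg_mx {R : realType} m n (u_ : 'M[R]_(m,n) ^nat) :
  cvgn [normed series u_] -> cvgn (series u_).
Proof.
move=> /cauchy_cvgP/cauchy_seriesP u_ncvg.
apply/cauchy_cvgP/cauchy_seriesP => e /u_ncvg.
apply: filterS => k /=; rewrite ger0_norm ?sumr_ge0//.
by apply: le_lt_trans; apply: ler_norm_sum.
Qed.

Lemma SS_ge0 (R : realType) k (x : 'cV[R]_k) : 0 <= SS x.
Proof. by apply: sumr_ge0 => i _; apply: sqr_ge0. Qed.

Lemma SSZ (R : realType) k (c : R) (x : 'cV[R]_k) : SS (c *: x) = c ^+ 2 * SS x.
Proof. by rewrite /SS mulr_sumr; apply: eq_bigr => i _; rewrite mxE exprMn. Qed.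

Lemma norm_le_SS (R : realType) k (x : 'cV[R]_k) (s : R) :
  0 <= s -> SS x <= s ^+ 2 -> `|x| <= s.
Proof.
move=> s0 Hs; rewrite /Num.norm /= mx_normrE.
elim/big_ind: _ => //; first by move=> a b ha hb; rewrite ge_max ha hb.
move=> [i j] _ /=; rewrite (ord1 j).
rewrite -ler_sqr ?nnegrE // real_normK ?num_real //.
apply: le_trans Hs; rewrite /SS (bigD1 i) //= lerDl.
by apply: sumr_ge0 => ? _; apply: sqr_ge0.
Qed.

Theorem theorem2 (R : realType) (m n : nat) (A : 'M[R]_(m, n))
  (HA : forall u i, A u i = 0 \/ A u i = 1)
  (alpha beta : R) (Ha : 0 <= alpha) (Hb : 0 <= beta)
  (Hg0 : 0 < 1 - alpha - beta) (Hg1 : 1 - alpha - beta < 1)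
  (qU rU' rU0 : 'cV[R]_m) (qI rI' rI0 : 'cV[R]_n) :
  cvgn (fun k => (cascade_iter A alpha beta qU rU' rU0 qI rI' rI0 k).1) /\
  cvgn (fun k => (cascade_iter A alpha beta qU rU' rU0 qI rI' rI0 k).2).
Proof.
set p := fun k => cascade_iter A alpha beta qU rU' rU0 qI rI' rI0 k.
set g := 1 - alpha - beta.
have HAT : forall i u, A^T i u = 0 \/ A^T i u = 1 by move=> i u; rewrite mxE.
have pS1 k : (p k.+1).1 = g *: (norm_biadj A *m (p k).2) + alpha *: qU + beta *: rU' by [].
have pS2 k : (p k.+1).2 = g *: ((norm_biadj A)^T *m (p k).1) + alpha *: qI + beta *: rI' by [].
have aux : forall k (a b c1 c2 : 'cV[R]_k), (a + c1 + c2) - (b + c1 + c2) = a - b.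
  by move=> k a b c1 c2; rewrite -[a + c1 + c2]addrA -[b + c1 + c2]addrA [b + _]addrC addrKA.
set dU := fun k => (p k.+1).1 - (p k).1.
set dI := fun k => (p k.+1).2 - (p k).2.
have dUS k : dU k.+1 = g *: (norm_biadj A *m dI k).
  rewrite /dU /dI (pS1 k.+1) (pS1 k) mulmxBr scalerBr.
  exact: aux.
have dIS k : dI k.+1 = g *: ((norm_biadj A)^T *m dU k).
  rewrite /dU /dI (pS2 k.+1) (pS2 k) mulmxBr scalerBr.
  exact: aux.
set E := fun k => SS (dU k) + SS (dI k).
have ES k : E k.+1 <= g ^+ 2 * E k.
  rewrite /E dUS dIS !SSZ -mulrDr; apply: ler_wpM2l; first exact: sqr_ge0.
  rewrite addrC; apply: lerD; last exact: (key _ _ _ _ HA).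
  by rewrite trmx_nb; apply: (key _ _ _ _ HAT).
have Ek k : E k <= g ^+ 2 ^+ k * E 0%N.
  elim: k => [|k IH]; first by rewrite expr0 mul1r.
  apply: le_trans (ES k) _; rewrite [(g ^+ 2) ^+ k.+1]exprS -mulrA; apply: ler_wpM2l => //.
  exact: sqr_ge0.
set C := 1 + E 0%N.
have E0 : 0 <= E 0%N by apply: addr_ge0; apply: SS_ge0.
have C1 : 1 <= C by rewrite /C lerDl.
have g0 : 0 <= g by apply: ltW.
have bnd k : E k <= (g ^+ k * C) ^+ 2.
  apply: le_trans (Ek k) _; rewrite exprMn.
  rewrite -expr2 exprMn.
  apply: ler_wpM2l; first exact: sqr_ge0.
  apply: le_trans (_ : C <= _); first by rewrite /C lerDr.
  by rewrite expr2 ler_peMl // (le_trans ler01).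
have gC0 k : 0 <= g ^+ k * C by apply: mulr_ge0; [apply: exprn_ge0 | apply: le_trans C1].
have geo : cvgn (series (geometric C g)).
  by apply: is_cvg_geometric_series; rewrite ger0_norm.
split.
- have -> : (fun k => (p k).1) = (fun k => (p 0%N).1 + series dU k).
    by apply: funext => k; exact: (eq_sum_telescope (fun k => (p k).1) k).
  apply: is_cvgD; first exact: is_cvg_cst.
  apply: normed_cvg_mx.
  apply: (series_le_cvg _ _ _ geo) => //= k.
  + by rewrite /geometric /= mulrC.
  + rewrite /geometric /= mulrC; apply: norm_le_SS => //.
    apply: le_trans (bnd k); rewrite /E lerDl; exact: SS_ge0.
- have -> : (fun k => (p k).2) = (fun k => (p 0%N).2 + series dI k).
    by apply: funext => k; exact: (eq_sum_telescope (fun k => (p k).2) k).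
  apply: is_cvgD; first exact: is_cvg_cst.
  apply: normed_cvg_mx.
  apply: (series_le_cvg _ _ _ geo) => //= k.
  + by rewrite /geometric /= mulrC.
  + rewrite /geometric /= mulrC; apply: norm_le_SS => //.
    apply: le_trans (bnd k); rewrite /E lerDr; exact: SS_ge0.
Qed.
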